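(* Let $n$ be a positive integer and let $a,b,c,\alpha$ be positive integers such that ${\alpha+n\choose n}+a=b+c$ and $a,b,c<{\alpha+n\choose n}$. Then \[{\alpha+n\choose n}^{<n>}+a^{<n>}\leq b^{<n>}+c^{<n>}.\] Moreover, if ${\alpha+n\choose n}^{<n>}+a^{<n>}=b^{<n>}+c^{<n>}$, then \[\Big\{{\alpha+n\choose n}^{<n>}\Big\}^{<n>}+\{a^{<n>}\}^{<n>}=\{b^{<n>}\}^{<n>}+\{c^{<n>}\}^{<n>}.\]
   Context: For positive integers $n,h$, $h$ can be written uniquely in the form ($n$th binomial representation) $h={h(n)+n\choose n}+{h(n-1)+n-1\choose n-1}+\dots+{h(i)+i\choose i}$ with $h(n)\geq h(n-1)\geq\dots\geq h(i)\geq 0$ and $i\geq 1$. Using this representation define $h^{<n>}={h(n)+n+1\choose n}+\dots+{h(i)+i+1\choose i}$. Iterates such as $\{h^{<n>}\}^{<n>}$ mean applying this operation (with the $n$th binomial representation of $h^{<n>}$) again. *)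

(* Defs.v *)
From mathcomp Require Import all_boot.
Set Implicit Arguments. Unset Strict Implicit. Unset Printing Implicit Defensive.

(* n-th binomial (Macaulay) representation of h, computed greedily.
   binrep n h = [:: (n, h(n)); (n-1, h(n-1)); ...; (i, h(i))]
   where h = \sum_(j,hj) 'C(hj + j, j), h(n) >= ... >= h(i) >= 0, i >= 1.
   At level j we take the largest m = h(j) + j with 'C(m, j) <= h
   (m ranges below h + j + 1, since 'C(h + j, j) > h for j >= 1),
   and continue with the remainder at level j - 1, stopping at 0.
   This greedy choice yields exactly the unique representation of the paper. *)
Fixpoint binrep (j h : nat) {struct j} : seq (nat * nat) :=
  match j with
  | 0 => [::]
  | j'.+1 =>
      if h == 0 then [::] else
      let m := \max_(m < h + j'.+2 | 'C(m, j'.+1) <= h) (m : nat) in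
      (j'.+1, m - j'.+1) :: binrep j' (h - 'C(m, j'.+1))
  end.

Definition mac_up (n h : nat) : nat :=
  \sum_(p <- binrep n h) 'C(p.2 + p.1 + 1, p.1).

(* Main.v *)
Require Import Defs.
From mathcomp Require Import all_boot zify.
Set Implicit Arguments. Unset Strict Implicit. Unset Printing Implicit Defensive.

Lemma bin_low m j : 0 < j -> m < 'C(m + j, j).
Proof.
move=> j0; elim: m => [|m IH]; first by rewrite add0n binn.
case: j j0 IH => // j _ IH.
rewrite addSn binS.
have : 0 < 'C(m + j.+1, j) by rewrite bin_gt0; lia.
lia.
Qed.

Lemma bin_exists j h : 0 < j -> exists M, j.-1 <= M /\ 'C(M, j) <= h < 'C(M.+1, j).
Proof.
move=> j0; elim: h => [|h [M [HM /andP [H1 H2]]]].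
  exists j.-1; rewrite prednK // bin_small ?binn //; lia.
case: (ltnP h.+1 'C(M.+1, j)) => H3.
  by exists M; split => //; apply/andP; split => //; lia.
exists M.+1; split; first lia.
have E : 'C(M.+1, j) = h.+1 by lia.
apply/andP; split; first by rewrite E.
case: j j0 HM H1 H2 H3 E => // j _ HM H1 H2 H3 E.
rewrite binS E.
have : 0 < 'C(M.+1, j) by rewrite bin_gt0; lia.
lia.
Qed.

Lemma max_char j h M : 0 < j -> 'C(M, j) <= h < 'C(M.+1, j) ->
  \max_(m < h + j.+1 | 'C(m, j) <= h) (m : nat) = M.
Proof.
move=> j0 /andP [H1 H2].
have HM : M < h + j.+1.
  rewrite ltnNge; apply/negP => H.
  have : 'C(h.+1 + j, j) <= 'C(M, j) by apply: leq_bin2l; lia.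
  have := bin_low h.+1 j0. lia.
apply/eqP; rewrite eqn_leq; apply/andP; split.
  apply/bigmax_leqP => i Hi.
  rewrite leqNgt; apply/negP => Hlt.
  have : 'C(M.+1, j) <= 'C(i, j) by apply: leq_bin2l.
  lia.
exact: (@leq_bigmax_cond _ _ (fun m : 'I_(h + j.+1) => (m : nat)) (Ordinal HM)).
Qed.

Lemma binrep_rec j h M : 0 < j -> 0 < h -> 'C(M, j) <= h < 'C(M.+1, j) ->
  binrep j h = (j, M - j) :: binrep j.-1 (h - 'C(M, j)).
Proof.
case: j => // j _ h0 HM.
rewrite /= (max_char (ltn0Sn j) HM).
by have -> : (h == 0) = false by lia.
Qed.

Definition Mono (F : nat -> nat) := forall x y, x <= y -> F x <= F y.
Definition Pp (F : nat -> nat) := forall x k, F (x + k) <= F x + F k.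
Definition Tp (F A : nat -> nat) := forall i x k, x + k <= A i ->
  F (A i) + F x <= F (x + k) + F (A i - k).
Definition L2p (F A : nat -> nat) := forall i k, k <= A i ->
  F (A i.+1) + F (A i - k) <= F (A i) + F (A i.+1 - k).

Lemma step (F F' A A' : nat -> nat) :
  Mono F' -> F' 0 = 0 -> Pp F' -> Tp F' A' -> L2p F' A' ->
  (forall i, A' i <= A' i.+1) -> (forall i, 0 < A' i.+1) ->
  A 0 = 0 -> (forall i, A i.+1 = A i + A' i.+1) -> F 0 = 0 ->
  (forall i r, r <= A' i.+1 -> F (A i + r) = F (A i) + F' r) ->
  Mono F /\ Pp F /\ Tp F A /\ L2p F A.
Proof.
move=> M' F'0 P' T' L2' A'm A'p A0 AS F0 FB.
have FB2 : forall i r y, y = A i + r -> r <= A' i.+1 -> F y = F (A i) + F' r.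
  by move=> i r y ->; exact: FB.
have P2 : forall x k y, y = x + k -> F' y <= F' x + F' k by move=> x k y ->; exact: P'.
have T2 : forall i x k y z, x + k <= A' i -> y = x + k -> z = A' i - k ->
    F' (A' i) + F' x <= F' y + F' z by move=> i x k y z H -> ->; exact: T'.
have Lm : forall i j, i <= j -> A' i.+1 <= A' j.+1.
  move=> i j /subnK <-; elim: (j - i) => [|d IH] //.
  rewrite addSn; exact: leq_trans IH (A'm _).
have Am : forall i j, i <= j -> A i <= A j.
  move=> i j /subnK <-; elim: (j - i) => [|d IH] //.
  rewrite addSn AS; exact: leq_trans IH (leq_addr _ _).
have Asm : forall i j, A i < A j.+1 -> i <= j.
  move=> i j H; rewrite leqNgt; apply/negP => H2.
  have := Am _ _ H2; lia.
have blk : forall y, exists i r, y = A i + r /\ r < A' i.+1.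
  elim => [|y [i [r [-> Hr]]]].
    by exists 0, 0; rewrite A0; split => //; exact: A'p.
  case: (ltnP r.+1 (A' i.+1)) => H.
    by exists i, r.+1; split => //; rewrite addnS.
  exists i.+1, 0; split; [rewrite AS addn0; lia | exact: A'p].
have MF : Mono F.
  have M1 : forall y, F y <= F y.+1.
    move=> y; have [i [r [-> Hr]]] := blk y.
    rewrite (FB i r (ltnW Hr)) -addnS (FB i r.+1 Hr) leq_add2l; apply: M'; lia.
  move=> x y /subnK <-; elim: (y - x) => [|d IH] //.
  rewrite addSn; exact: leq_trans IH (M1 _).
have Wshort : forall i j q o, i <= j -> q < A' j.+1 -> o <= A' i.+1 ->
    F (A j + q + o) <= F (A j + q) + F' o.
  move=> i j q o Hij Hq Ho.
  have Hl := Lm i j Hij. have Hl2 := A'm j.+1.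
  case: (leqP (q + o) (A' j.+1)) => H.
    rewrite -addnA (FB j _ H) (FB j q (ltnW Hq)). have := P' q o. lia.
  have E1 := FB2 j.+1 (q + o - A' j.+1) (A j + q + o) ltac:(rewrite AS; lia) ltac:(lia).
  have E2 := FB2 j (A' j.+1) (A j.+1) ltac:(by rewrite AS) (leqnn _).
  have E3 := FB2 j q (A j + q) erefl (ltnW Hq).
  have H4 := T2 j.+1 (q + o - A' j.+1) (A' j.+1 - q) o q ltac:(lia) ltac:(lia) ltac:(lia).
  lia.
have S : forall i o R, o <= A' i.+1 ->
    F (A i + o + R) + F (A i) <= F (A i + o) + F (A i + R).
  move=> i o R Ho.
  have HL := A'm i.+1.
  case: (leqP (o + R) (A' i.+1)) => H.
    have E1 := FB2 i (o + R) (A i + o + R) ltac:(lia) H.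
    have E2 := FB2 i o (A i + o) erefl Ho.
    have E3 := FB2 i R (A i + R) erefl ltac:(lia).
    have := P' o R. lia.
  case: (leqP (A' i.+1) R) => HR.
    have [j [q [Ej Hq]]] := blk (A i.+1 + (R - A' i.+1)).
    have Hij : i <= j.
      have : A i.+1 < A j.+1 by have := AS j; lia.
      move/Asm; lia.
    have := Wshort i j q o Hij Hq Ho.
    have -> : A i + o + R = A j + q + o by rewrite AS in Ej; lia.
    have -> : A i + R = A j + q by rewrite AS in Ej; lia.
    have E2 := FB2 i o (A i + o) erefl Ho.
    lia.
  have E1 := FB2 i.+1 (o + R - A' i.+1) (A i + o + R) ltac:(rewrite AS; lia) ltac:(lia).
  have E2 := FB2 i (A' i.+1) (A i.+1) ltac:(by rewrite AS) (leqnn _).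
  have E3 := FB2 i o (A i + o) erefl Ho.
  have E4 := FB2 i R (A i + R) erefl ltac:(lia).
  have H5 := T2 i.+1 (o + R - A' i.+1) (A' i.+1 - o) R o ltac:(lia) ltac:(lia) ltac:(lia).
  lia.
have Ch : forall i R, F (A i + R) <= F (A i) + F R.
  elim => [|i IH] R; first by rewrite A0 F0.
  have := S i (A' i.+1) R (leqnn _). rewrite -AS. have := IH R. lia.
have PF : Pp F.
  move=> x k; have [i [o [-> Ho]]] := blk x.
  have := S i o k (ltnW Ho). have := Ch i k. lia.
have TL : forall i,
    (forall x k, x + k <= A i -> F (A i) + F x <= F (x + k) + F (A i - k)) /\
    (forall k, k <= A i -> F (A i.+1) + F (A i - k) <= F (A i) + F (A i.+1 - k)).
  elim => [|i [Ti Li]].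
    split => [x k|k]; rewrite A0 => H.
      have -> : k = 0 by lia. have -> : x = 0 by lia. by [].
    have -> : k = 0 by lia. rewrite !subn0. lia.
  have Ti2 : forall x k y z, x + k <= A i -> y = x + k -> z = A i - k ->
      F (A i) + F x <= F y + F z by move=> x k y z H -> ->; exact: Ti.
  have Li2 : forall k y z, k <= A i -> y = A i - k -> z = A i.+1 - k ->
      F (A i.+1) + F y <= F (A i) + F z by move=> k y z H -> ->; exact: Li.
  have ASi := AS i. have ASi1 := AS i.+1. have HLL := A'm i.+1.
  have EL := FB2 i (A' i.+1) (A i.+1) ASi (leqnn _).
  split.
    move=> x k H.
    case: (leqP (x + k) (A i)) => H1.
      have := Ti x k H1. have := Li k ltac:(lia). lia.
    case: (leqP (A i) x) => H2.
      have E1 := FB2 i (x - A i) x ltac:(lia) ltac:(lia).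
      have E2 := FB2 i (x - A i + k) (x + k) ltac:(lia) ltac:(lia).
      have E4 := FB2 i (A' i.+1 - k) (A i.+1 - k) ltac:(lia) ltac:(lia).
      have := T2 i.+1 (x - A i) k (x - A i + k) (A' i.+1 - k) ltac:(lia) erefl erefl.
      lia.
    case: (leqP k (A' i.+1)) => H3.
      have E2 := FB2 i (x + k - A i) (x + k) ltac:(lia) ltac:(lia).
      have E4 := FB2 i (A' i.+1 - k) (A i.+1 - k) ltac:(lia) ltac:(lia).
      have E5 := FB2 i (A' i.+1 - (A i - x)) (A i.+1 - (A i - x)) ltac:(lia) ltac:(lia).
      have := Li2 (A i - x) x (A i.+1 - (A i - x)) ltac:(lia) ltac:(lia) erefl.
      have := P2 (A' i.+1 - k) (x + k - A i) (A' i.+1 - (A i - x)) ltac:(lia).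
      lia.
    have -> : A i.+1 - k = x + (A' i.+1 - (x + k - A i)) by lia.
    have E2 := FB2 i (x + k - A i) (x + k) ltac:(lia) ltac:(lia).
    have E5 := FB2 i (x + k - A i) (A i.+1 - (A' i.+1 - (x + k - A i))) ltac:(lia) ltac:(lia).
    have := Li2 (A' i.+1 - (x + k - A i)) (A i - (A' i.+1 - (x + k - A i)))
       (A i.+1 - (A' i.+1 - (x + k - A i))) ltac:(lia) erefl erefl.
    have := Ti2 x (A' i.+1 - (x + k - A i)) (x + (A' i.+1 - (x + k - A i)))
       (A i - (A' i.+1 - (x + k - A i))) ltac:(lia) erefl erefl.
    lia.
  move=> k; elim/ltn_ind: k => k IHk Hk.
  have EL1 := FB2 i.+1 (A' i.+2) (A i.+2) ASi1 (leqnn _).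
  have Hp := A'p i. have Hp1 := A'p i.+1.
  case: (leqP k (A' i.+1)) => H1.
    have E1 := FB2 i (A' i.+1 - k) (A i.+1 - k) ltac:(lia) ltac:(lia).
    have E2 := FB2 i.+1 (A' i.+2 - k) (A i.+2 - k) ltac:(lia) ltac:(lia).
    have := L2' i.+1 k H1. lia.
  case: (leqP k (A' i.+2)) => H2.
    have -> : A i.+1 - k = A i - (k - A' i.+1) by lia.
    have E2 := FB2 i.+1 (A' i.+2 - k) (A i.+2 - k) ltac:(lia) ltac:(lia).
    have E3 := FB2 i.+1 (A' i.+2 - (k - A' i.+1)) (A i.+2 - (k - A' i.+1)) ltac:(lia) ltac:(lia).
    have := IHk (k - A' i.+1) ltac:(lia) ltac:(lia).
    have := Li2 (k - A' i.+1) (A i - (k - A' i.+1)) (A i.+1 - (k - A' i.+1)) ltac:(lia) erefl erefl.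
    have := P2 (A' i.+2 - k) (A' i.+1) (A' i.+2 - (k - A' i.+1)) ltac:(lia).
    lia.
  have -> : A i.+2 - k = A i.+1 - (k - A' i.+2) by lia.
  have -> : A i.+1 - k = A i - (k - A' i.+2) - (A' i.+2 - A' i.+1) by lia.
  have := Li2 (k - A' i.+2) (A i - (k - A' i.+2)) (A i.+1 - (k - A' i.+2)) ltac:(lia) erefl erefl.
  have := Ti2 (A i - (k - A' i.+2) - (A' i.+2 - A' i.+1)) (A' i.+2 - A' i.+1)
     (A i - (k - A' i.+2)) (A i - (A' i.+2 - A' i.+1)) ltac:(lia) ltac:(lia) erefl.
  have := IHk (A' i.+2 - A' i.+1) ltac:(lia) ltac:(lia).
  have E3 := FB2 i.+1 (A' i.+1) (A i.+2 - (A' i.+2 - A' i.+1)) ltac:(lia) ltac:(lia).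
  have := Li2 (A' i.+2 - A' i.+1) (A i - (A' i.+2 - A' i.+1)) (A i.+1 - (A' i.+2 - A' i.+1))
     ltac:(lia) erefl erefl.
  lia.
split => //; split => //; split => [i|i]; [exact: (TL i).1 | exact: (TL i).2].
Qed.

Definition cs n s h := \sum_(p <- binrep n h)
  (if s <= p.1 then 'C(p.2 + p.1 - s, p.1 - s) else 0).
Definition Aa n i := 'C(i + n.-1, n).

Lemma binrep0 n : binrep n 0 = [::].
Proof. by case: n. Qed.

Lemma mac_up0 n : mac_up n 0 = 0.
Proof. by rewrite /mac_up binrep0 big_nil. Qed.

Lemma cs0 n s : cs n s 0 = 0.
Proof. by rewrite /cs binrep0 big_nil. Qed.

Lemma mac_up_0 h : mac_up 0 h = 0.
Proof. by rewrite /mac_up /= big_nil. Qed.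

Lemma decomp n h : 0 < n -> 0 < h ->
  exists M r, n <= M /\ r < 'C(M, n.-1) /\ h = 'C(M, n) + r.
Proof.
move=> n0 h0; have [M [HM /andP [H1 H2]]] := bin_exists h n0.
case: n n0 HM H1 H2 => // n _ HM H1 H2.
rewrite binS in H2.
case: (ltnP n M) => HM'; last first.
  have E : M = n by lia.
  by rewrite E binn bin_small in H2; lia.
exists M, (h - 'C(M, n.+1)); split => //; split => /=; lia.
Qed.

Lemma block n M r : 0 < n -> n <= M -> r < 'C(M, n.-1) ->
  binrep n ('C(M, n) + r) = (n, M - n) :: binrep n.-1 r.
Proof.
move=> n0 HM Hr.
have Cp : 0 < 'C(M, n) by rewrite bin_gt0.
rewrite (binrep_rec (M := M)) //; first by rewrite addKn.
  lia.
case: n n0 HM Hr Cp => // n _ HM /= Hr Cp; rewrite binS /=; apply/andP; split; lia.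
Qed.

Lemma mac_block n M r : 0 < n -> n <= M -> r < 'C(M, n.-1) ->
  mac_up n ('C(M, n) + r) = 'C(M.+1, n) + mac_up n.-1 r.
Proof.
move=> n0 HM Hr; rewrite /mac_up block // big_cons /=.
by rewrite subnK // addn1.
Qed.

Lemma cs_block n s M r : 0 < n -> n <= M -> r < 'C(M, n.-1) ->
  cs n s ('C(M, n) + r) = (if s <= n then 'C(M - s, n - s) else 0) + cs n.-1 s r.
Proof.
move=> n0 HM Hr; rewrite /cs block // big_cons /=.
by rewrite subnK.
Qed.

Lemma cs_big n s h : n < s -> cs n s h = 0.
Proof.
elim: n h => [|n IH] h Hs; first by rewrite /cs /= big_nil.
case: (posnP h) => [->|h0]; first exact: cs0.
have [M [r [HM [Hr ->]]]] := decomp (ltn0Sn n) h0.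
rewrite cs_block //= IH; last lia.
by have -> : (s <= n.+1) = false by lia.
Qed.

Lemma cs_one n s : 0 < s -> s <= n -> cs n s 1 = 1.
Proof.
move=> s0 sn.
have n0 : 0 < n by lia.
have Hr : 0 < 'C(n, n.-1) by rewrite bin_gt0; lia.
have := @cs_block n s n 0 n0 (leqnn n) Hr.
rewrite !binn addn0 sn cs0 addn0.
by move=> ->.
Qed.

Lemma cs_base s h : 0 < s -> cs s s h = minn h 1.
Proof.
move=> s0; case: (posnP h) => [->|h0]; first by rewrite cs0.
have [M [r [HM [Hr ->]]]] := decomp s0 h0.
rewrite cs_block // leqnn subnn bin0 cs_big; last lia.
have : 0 < 'C(M, s) by rewrite bin_gt0.
lia.
Qed.

Definition Good k s := Mono (cs k s) /\ cs k s 0 = 0 /\ Pp (cs k s) /\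
  Tp (cs k s) (Aa k) /\ L2p (cs k s) (Aa k).

Lemma Aa_lt s i : 0 < s -> Aa s i < Aa s i.+1.
Proof.
rewrite /Aa; case: s => // s _ /=.
rewrite addSn binS.
have : 0 < 'C(i + s, s) by rewrite bin_gt0; lia.
lia.
Qed.

Lemma good_base s : 0 < s -> Good s s.
Proof.
move=> s0; split; [|split; [|split; [|split]]].
- move=> x y H; rewrite !cs_base //; lia.
- exact: cs0.
- move=> x k; rewrite !cs_base //; lia.
- move=> i x k H; rewrite !cs_base //; lia.
- move=> i k H; have := Aa_lt i s0; rewrite !cs_base //; lia.
Qed.

Lemma concat k s : 0 < s -> s <= k -> forall i r, r <= Aa k i.+1 ->
  cs k.+1 s (Aa k.+1 i + r) = cs k.+1 s (Aa k.+1 i) + cs k s r.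
Proof.
move=> s0 sk i r; rewrite /Aa /=.
have -> : i.+1 + k.-1 = i + k by lia.
case: (posnP i) => [->|i0] Hr.
  rewrite add0n bin_small // cs0 add0n.
  rewrite add0n binn in Hr.
  case: (posnP r) => [->|r0]; first by rewrite !cs0.
  have -> : r = 1 by lia.
  rewrite !cs_one //; lia.
have Hk : 0 < k by lia.
have HCp : 0 < 'C(i + k, k) by rewrite bin_gt0; lia.
have E2 := @cs_block k.+1 s (i + k) 0 (ltn0Sn k) ltac:(lia) HCp.
rewrite addn0 cs0 addn0 in E2.
case: (ltnP r 'C(i + k, k)) => Hr2.
  rewrite (@cs_block k.+1 s (i + k) r (ltn0Sn k) ltac:(lia) Hr2) E2 /=.
  done.
have -> : r = 'C(i + k, k) by lia.
rewrite E2 -binS.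
have HCp2 : 0 < 'C((i + k).+1, k) by rewrite bin_gt0; lia.
have E3 := @cs_block k.+1 s (i + k).+1 0 (ltn0Sn k) ltac:(lia) HCp2.
rewrite addn0 cs0 addn0 in E3.
have HCp3 : 0 < 'C(i + k, k.-1) by rewrite bin_gt0; lia.
have E4 := @cs_block k s (i + k) 0 Hk ltac:(lia) HCp3.
rewrite addn0 cs0 addn0 sk in E4.
rewrite E3 E4 ltnW //.
have -> : (i + k).+1 - s = (i + k - s).+1 by lia.
have -> : k.+1 - s = (k - s).+1 by lia.
by rewrite binS.
Qed.

Lemma good_step k s : 0 < s -> s <= k -> Good k s -> Good k.+1 s.
Proof.
move=> s0 sk [M' [F0' [P' [T' L']]]].
have Hk : 0 < k by lia.
have [] := @step (cs k.+1 s) (cs k s) (Aa k.+1) (Aa k) M' F0' P' T' L' _ _ _ _ (cs0 _ _)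
  (concat s0 sk).
- move=> i; rewrite /Aa; apply: leq_bin2l; lia.
- move=> i; rewrite /Aa bin_gt0; lia.
- by rewrite /Aa /= add0n bin_small.
- move=> i; rewrite /Aa /=.
  have -> : i.+1 + k.-1 = i + k by lia.
  by rewrite addSn binS addnC.
move=> MF [PF [TF LF]].
by split; [|split; [exact: cs0|split]].
Qed.

Lemma good s d : 0 < s -> Good (s + d) s.
Proof.
move=> s0; elim: d => [|d IH]; first by rewrite addn0; exact: good_base.
rewrite addnS; apply: good_step => //; lia.
Qed.

Lemma cs_T n s alpha x k : 0 < s -> s <= n -> x + k <= 'C(alpha + n, n) ->
  cs n s 'C(alpha + n, n) + cs n s x <= cs n s (x + k) + cs n s ('C(alpha + n, n) - k).
Proof.
move=> s0 sn H.
have [_ [_ [_ [T _]]]] := good (n - s) s0.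
rewrite subnKC in T => //.
have E : Aa n alpha.+1 = 'C(alpha + n, n) by rewrite /Aa; congr 'C(_, _); lia.
have := T alpha.+1 x k; rewrite E; exact.
Qed.

Lemma BA n M : n <= M ->
  'C(M.+1, n) = 'C(M, n) + \sum_(i < n) 'C(M - i.+1, n - i.+1).
Proof.
elim: n M => [|n IH] M HM; first by rewrite big_ord0 !bin0.
rewrite big_ord_recl /=.
have HM1 : n <= M.-1 by lia.
have := IH M.-1 HM1.
have -> : M.-1.+1 = M by lia.
have -> : \sum_(i < n) 'C(M - (bump 0 i).+1, n.+1 - (bump 0 i).+1)
        = \sum_(i < n) 'C(M.-1 - i.+1, n - i.+1).
  by apply: eq_bigr => i _; rewrite /bump /=; congr 'C(_, _); lia.
have -> : M - 1 = M.-1 by lia.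
rewrite subn1 /= binS. lia.
Qed.

Lemma BB n M : n <= M ->
  'C(M.+2, n) = 'C(M.+1, n) + \sum_(i < n) i.+1 * 'C(M - i.+1, n - i.+1).
Proof.
elim: n M => [|n IH] M HM; first by rewrite big_ord0 !bin0.
rewrite big_ord_recl /=.
have HM1 : n <= M.-1 by lia.
have E1 := IH M.-1 HM1.
have E2 := BA HM1.
have X1 : M.-1.+2 = M.+1 by lia.
have X2 : M.-1.+1 = M by lia.
rewrite X1 X2 in E1. rewrite X2 in E2.
have -> : \sum_(i < n) (bump 0 i).+1 * 'C(M - (bump 0 i).+1, n.+1 - (bump 0 i).+1)
        = \sum_(i < n) i.+1 * 'C(M.-1 - i.+1, n - i.+1)
          + \sum_(i < n) 'C(M.-1 - i.+1, n - i.+1).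
  rewrite -big_split /=; apply: eq_bigr => i _; rewrite /bump /=.
  have -> : M - i.+2 = M.-1 - i.+1 by lia.
  have -> : n.+1 - i.+2 = n - i.+1 by lia.
  by rewrite mulSn addnC.
rewrite subn1 subSS subn0 binS mul1n.
idtac.
lia.
Qed.

Lemma U n h M : h < 'C(M, n) -> mac_up n h < 'C(M.+1, n).
Proof.
elim: n h M => [|n IH] h M H; first by rewrite mac_up_0 bin0.
case: (posnP h) => [E|h0].
  rewrite E mac_up0 bin_gt0; rewrite E bin_gt0 in H; lia.
have [M' [r [HM [Hr E]]]] := decomp (ltn0Sn n) h0.
rewrite E mac_block //=.
have HMM : M' < M.
  rewrite ltnNge; apply/negP => Hc.
  have := leq_bin2l n.+1 Hc. lia.
have := IH r M' Hr.
have := leq_bin2l n.+1 (HMM : M'.+2 <= M.+1).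
rewrite [in 'C(M'.+2, _)]binS.
lia.
Qed.

Lemma sum_drop1 n r : \sum_(i < n.+1) cs n i.+1 r = \sum_(i < n) cs n i.+1 r.
Proof. by rewrite big_ord_recr /= cs_big // addn0. Qed.

Lemma sum_drop2 n r : \sum_(i < n.+1) i.+1 * cs n i.+1 r = \sum_(i < n) i.+1 * cs n i.+1 r.
Proof. by rewrite big_ord_recr /= cs_big // muln0 addn0. Qed.

Lemma sum_block1 n M r : n < M -> r < 'C(M, n) ->
  \sum_(i < n.+1) cs n.+1 i.+1 ('C(M, n.+1) + r) =
  \sum_(i < n.+1) 'C(M - i.+1, n.+1 - i.+1) + \sum_(i < n) cs n i.+1 r.
Proof.
move=> HM Hr; rewrite -(sum_drop1 n r).
rewrite (eq_bigr (fun i : 'I_n.+1 => 'C(M - i.+1, n.+1 - i.+1) + cs n i.+1 r)).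
  by rewrite big_split.
by move=> i _; rewrite cs_block //= ltn_ord.
Qed.

Lemma sum_block2 n M r : n < M -> r < 'C(M, n) ->
  \sum_(i < n.+1) i.+1 * cs n.+1 i.+1 ('C(M, n.+1) + r) =
  \sum_(i < n.+1) i.+1 * 'C(M - i.+1, n.+1 - i.+1) + \sum_(i < n) i.+1 * cs n i.+1 r.
Proof.
move=> HM Hr; rewrite -(sum_drop2 n r).
rewrite (eq_bigr (fun i : 'I_n.+1 => i.+1 * 'C(M - i.+1, n.+1 - i.+1) + i.+1 * cs n i.+1 r)).
  by rewrite big_split.
by move=> i _; rewrite cs_block //= ltn_ord mulnDr.
Qed.

Lemma I1 n h : 0 < n \/ h = 0 -> mac_up n h = h + \sum_(i < n) cs n i.+1 h.
Proof.
elim: n h => [|n IH] h H.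
  by case: H => // ->; rewrite mac_up_0 big_ord0.
case: (posnP h) => [->|h0].
  by rewrite mac_up0 big1 // => i _; rewrite cs0.
have [M [r [HM [Hr E]]]] := decomp (ltn0Sn n) h0.
rewrite E mac_block //=.
have Hr' : 0 < n \/ r = 0.
  case: n IH H HM Hr E => [|n] IH H HM Hr E; last by left.
  by right; rewrite bin0 in Hr; lia.
rewrite (IH r Hr').
rewrite sum_block1 //.
have := BA HM. lia.
Qed.

Lemma I2 n h : 0 < n \/ h = 0 ->
  mac_up n (mac_up n h) = mac_up n h + \sum_(i < n) i.+1 * cs n i.+1 h.
Proof.
elim: n h => [|n IH] h H.
  by rewrite !mac_up_0 big_ord0.
case: (posnP h) => [->|h0].
  by rewrite !mac_up0 big1 // => i _; rewrite cs0 muln0.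
have [M [r [HM [Hr E]]]] := decomp (ltn0Sn n) h0.
rewrite E mac_block //=.
have Hr' : 0 < n \/ r = 0.
  case: n IH H HM Hr E => [|n] IH H HM Hr E; last by left.
  by right; rewrite bin0 in Hr; lia.
have Hu := U Hr.
rewrite mac_block //=; last lia.
rewrite (IH r Hr').
rewrite sum_block2 //.
have := BB HM. lia.
Qed.

Lemma gsum_le n (f g h k : nat -> nat) :
  (forall i, i < n -> f i + g i <= h i + k i) ->
  \sum_(i < n) f i + \sum_(i < n) g i <= \sum_(i < n) h i + \sum_(i < n) k i.
Proof.
elim: n => [|n IH] H; first by rewrite !big_ord0.
rewrite !big_ord_recr /=.
have := IH (fun i Hi => H i (ltnW Hi)). have := H n (ltnSn n).
set x1 := \sum_(i < n) f i. set x2 := \sum_(i < n) g i.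
set x3 := \sum_(i < n) h i. set x4 := \sum_(i < n) k i.
lia.
Qed.

Lemma gsum_eq n (f g h k : nat -> nat) :
  (forall i, i < n -> f i + g i <= h i + k i) ->
  \sum_(i < n) f i + \sum_(i < n) g i = \sum_(i < n) h i + \sum_(i < n) k i ->
  forall i, i < n -> f i + g i = h i + k i.
Proof.
elim: n => [|n IH] H E i Hi; first by [].
rewrite !big_ord_recr /= in E.
have L := gsum_le (fun i Hi => H i (ltnW Hi)).
have Hn := H n (ltnSn n).
move: E L.
set x1 := \sum_(i < n) f i. set x2 := \sum_(i < n) g i.
set x3 := \sum_(i < n) h i. set x4 := \sum_(i < n) k i.
move=> E L.
have E' : \sum_(i < n) f i + \sum_(i < n) g i = \sum_(i < n) h i + \sum_(i < n) k i by rewrite /x1 /x2 /x3 /x4 in E L *; lia.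
case: (ltnP i n) => Hin; first exact: IH (fun i Hi => H i (ltnW Hi)) E' i Hin.
have -> : i = n by lia.
lia.
Qed.

Lemma gsum_w n (f g h k : nat -> nat) :
  (forall i, i < n -> f i + g i = h i + k i) ->
  \sum_(i < n) i.+1 * f i + \sum_(i < n) i.+1 * g i =
  \sum_(i < n) i.+1 * h i + \sum_(i < n) i.+1 * k i.
Proof.
elim: n => [|n IH] H; first by rewrite !big_ord0.
rewrite !big_ord_recr /=.
have := IH (fun i Hi => H i (ltnW Hi)). 
have E1 := H n (ltnSn n).
have E2 : n.+1 * (f n + g n) = n.+1 * (h n + k n) by rewrite E1.
rewrite !mulnDr in E2.
set x1 := \sum_(i < n) i.+1 * f i. set x2 := \sum_(i < n) i.+1 * g i.
set x3 := \sum_(i < n) i.+1 * h i. set x4 := \sum_(i < n) i.+1 * k i.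
lia.
Qed.

Theorem lemma1p6 (n a b c alpha : nat) :
  0 < n -> 0 < a -> 0 < b -> 0 < c -> 0 < alpha ->
  'C(alpha + n, n) + a = b + c ->
  a < 'C(alpha + n, n) -> b < 'C(alpha + n, n) -> c < 'C(alpha + n, n) ->
  mac_up n 'C(alpha + n, n) + mac_up n a <= mac_up n b + mac_up n c /\
  (mac_up n 'C(alpha + n, n) + mac_up n a = mac_up n b + mac_up n c ->
   mac_up n (mac_up n 'C(alpha + n, n)) + mac_up n (mac_up n a)
   = mac_up n (mac_up n b) + mac_up n (mac_up n c)).
Proof.
move=> n0 a0 b0 c0 al0 E Ha Hb Hc.
have key : forall i, i < n ->
    cs n i.+1 'C(alpha + n, n) + cs n i.+1 a <= cs n i.+1 b + cs n i.+1 c.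
  move=> i Hi.
  have := @cs_T n i.+1 alpha a (c - a) (ltn0Sn _) Hi ltac:(lia).
  have -> : a + (c - a) = c by lia.
  have -> : 'C(alpha + n, n) - (c - a) = b by lia.
  lia.
have Sle : \sum_(i < n) cs n i.+1 'C(alpha + n, n) + \sum_(i < n) cs n i.+1 a <=
           \sum_(i < n) cs n i.+1 b + \sum_(i < n) cs n i.+1 c.
  by apply: (gsum_le (f := fun i => cs n i.+1 'C(alpha + n, n))
                     (g := fun i => cs n i.+1 a) (h := fun i => cs n i.+1 b)
                     (k := fun i => cs n i.+1 c)).
have n0' : 0 < n \/ True by left.
rewrite !(@I1 n) ; try by left.
split; first lia.
move=> Heq.
have Seq : \sum_(i < n) cs n i.+1 'C(alpha + n, n) + \sum_(i < n) cs n i.+1 a =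
           \sum_(i < n) cs n i.+1 b + \sum_(i < n) cs n i.+1 c by lia.
have P := gsum_eq (f := fun i => cs n i.+1 'C(alpha + n, n))
                     (g := fun i => cs n i.+1 a) (h := fun i => cs n i.+1 b)
                     (k := fun i => cs n i.+1 c) key Seq.
have W : \sum_(i < n) i.+1 * cs n i.+1 'C(alpha + n, n) + \sum_(i < n) i.+1 * cs n i.+1 a =
           \sum_(i < n) i.+1 * cs n i.+1 b + \sum_(i < n) i.+1 * cs n i.+1 c.
  exact: (gsum_w (f := fun i => cs n i.+1 'C(alpha + n, n))
                     (g := fun i => cs n i.+1 a) (h := fun i => cs n i.+1 b)
                     (k := fun i => cs n i.+1 c) P).
rewrite -!(@I1 n) in Heq *; try by left.
rewrite !(@I2 n); try by left.
lia.
Qed.
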